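(* Let $s=(s_1,\dots,s_m)$ be a sequence of positive integers. Then the $s$-permutahedron (the Hasse diagram of the $s$-weak order on $s$-decreasing trees) has a Hamilton path, i.e., there is a listing of all $s$-decreasing trees, each exactly once, in which every two consecutive trees form a cover relation of the $s$-weak order.
   Context: Let $s=(s_1,\dots,s_m)$ be a sequence of positive integers. An $s$-decreasing tree is a rooted plane tree with $m$ internal nodes labelled $1,\dots,m$ (together with unlabelled leaves) such that the internal node labelled $i$ has exactly $s_i+1$ children, ordered from left to right and indexed $0,1,\dots,s_i$, and labels strictly decrease along every path from the root (so the root is labelled $m$). For an $s$-decreasing tree $T$ and labels $a<b$, the tree-inversion number $\#_T(b,a)$ is defined as: $0$ if $a$ lies to the left of $b$ or in the subtree of the child of $b$ with index $0$; $i$ if $a$ lies in the subtree of the child of $b$ with index $i$ ($0\le i\le s_b$); and $s_b$ if $a$ lies to the right of $b$. The $s$-weak order is the partial order on $s$-decreasing trees given by $T\le T'$ iff $\#_T(b,a)\le \#_{T'}(b,a)$ for all $1\le a<b\le m$. The $s$-permutahedron is the graph whose vertices are the $s$-decreasing trees and whose edges are the cover relations of the $s$-weak order. *)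

(* Defs.v *)
From Stdlib Require List.
From mathcomp Require Import all_boot.
Set Implicit Arguments. Unset Strict Implicit. Unset Printing Implicit Defensive.

(* Rooted plane trees: leaves are unlabelled, internal nodes carry a label
   and an ordered (left-to-right) list of children, indexed 0,1,... *)
Inductive tree : Type :=
| Leaf : tree
| Node : nat -> seq tree -> tree.

(* s = (s_1,...,s_m) is a seq nat; s_i := nth 0 s (i-1), m := size s. *)
Definition s_at (s : seq nat) (i : nat) : nat := nth 0 s i.-1.

Fixpoint labels (T : tree) : seq nat :=
  match T with
  | Leaf => [::]
  | Node i cs => i :: flatten (map labels cs)
  end.

Definition root_label_lt (i : nat) (c : tree) : bool :=
  match c with Leaf => true | Node j _ => j < i end.

(* local conditions: node labelled i has s_i + 1 children, and the labels of
   its internal children are smaller than i (hence labels strictly decrease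
   along every path from the root). *)
Fixpoint local_ok (s : seq nat) (T : tree) : bool :=
  match T with
  | Leaf => true
  | Node i cs =>
      [&& size cs == (s_at s i).+1, all (root_label_lt i) cs & all (local_ok s) cs]
  end.

Definition s_decreasing (s : seq nat) (T : tree) : Prop :=
  perm_eq (labels T) (iota 1 (size s)) /\ local_ok s T.

(* Address of the internal node labelled x: sequence of child indices from
   the root (None if there is no such node). *)
Fixpoint addr (x : nat) (T : tree) : option (seq nat) :=
  match T with
  | Leaf => None
  | Node i cs =>
      if i == x then Some [::] else
      (fix go (k : nat) (cs : seq tree) : option (seq nat) :=
         match cs with
         | [::] => None
         | c :: cs' => match addr x c with
                       | Some p => Some (k :: p)
                       | None => go k.+1 cs'
                       end
         end) 0 cs
  end.

(* The node at address pa lies strictly to the left of the node at address pb: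
   at the first position where the addresses differ, pa takes a smaller child
   index. *)
Fixpoint left_of (pa pb : seq nat) : bool :=
  match pa, pb with
  | x :: pa', y :: pb' => if x == y then left_of pa' pb' else x < y
  | _, _ => false
  end.

(* Tree-inversion number #_T(b,a) (intended for a < b):
   - i   if a lies in the subtree of the child of b with index i;
   - 0   if a lies to the left of b;
   - s_b if a lies to the right of b. *)
Definition tinv (s : seq nat) (T : tree) (b a : nat) : nat :=
  match addr a T, addr b T with
  | Some pa, Some pb =>
      if prefix pb pa then nth 0 pa (size pb)
      else if left_of pa pb then 0 else s_at s b
  | _, _ => 0
  end.

Definition s_le (s : seq nat) (T T' : tree) : Prop :=
  forall a b, 0 < a -> a < b -> b <= size s -> tinv s T b a <= tinv s T' b a.

Definition s_cover (s : seq nat) (T T' : tree) : Prop :=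
  [/\ s_decreasing s T, s_decreasing s T', s_le s T T', T <> T' &
      forall U, s_decreasing s U -> s_le s T U -> s_le s U T' ->
        U = T \/ U = T'].

(* Main.v *)
Require Import Defs.
From Stdlib Require List.
From mathcomp Require Import all_boot zify.
Set Implicit Arguments. Unset Strict Implicit. Unset Printing Implicit Defensive.

Definition tree_ind' (P : tree -> Prop) (HL : P Leaf)
  (HN : forall i cs, (forall c, List.In c cs -> P c) -> P (Node i cs)) :
  forall T, P T :=
  fix F T := match T with
  | Leaf => HL
  | Node i cs => HN i cs ((fix G (cs : seq tree) : forall c, List.In c cs -> P c :=
       match cs with
       | [::] => fun c H => False_ind _ H
       | c0 :: cs' => fun c H => match H with
                     | or_introl e => eq_ind c0 P (F c0) c e
                     | or_intror H' => G cs' c H' end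
       end) cs)
  end.

Fixpoint nlv (T : tree) : nat :=
  match T with Leaf => 1 | Node _ cs => sumn (map nlv cs) end.

Section S.
Variable s : seq nat.

Definition X (x : nat) := Node x (nseq (s_at s x).+1 Leaf).

Fixpoint ins (x j : nat) (T : tree) : tree :=
  match T with
  | Leaf => X x
  | Node i cs => Node i ((fix insl (j : nat) (cs : seq tree) :=
       match cs with
       | [::] => [::]
       | c :: cs' => if j < nlv c then ins x j c :: cs' else c :: insl (j - nlv c) cs'
       end) j cs)
  end.

Fixpoint insl (x j : nat) (cs : seq tree) :=
  match cs with
  | [::] => [::]
  | c :: cs' => if j < nlv c then ins x j c :: cs' else c :: insl x (j - nlv c) cs'
  end.

Lemma ins_node x j i cs : ins x j (Node i cs) = Node i (insl x j cs).
Proof.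
elim: cs j => [|c cs IH] j //=.
case: (j < nlv c) => //. by case: (IH (j - nlv c)) => ->.
Qed.

End S.

Fixpoint goA (b k : nat) (cs : seq tree) : option (seq nat) :=
  match cs with
  | [::] => None
  | c :: cs' => match addr b c with
                | Some p => Some (k :: p)
                | None => goA b k.+1 cs'
                end
  end.

Lemma addr_node b i cs : addr b (Node i cs) = if i == b then Some [::] else goA b 0 cs.
Proof.
simpl. case: (i == b) => //.
elim: cs 0 => [|c cs IH] k //=.
by case: (addr b c) => //.
Qed.

Fixpoint rem (x : nat) (T : tree) : tree :=
  match T with
  | Leaf => Leaf
  | Node i cs => if i == x then Leaf else Node i (map (rem x) cs)
  end.

Lemma addr_none T b : b \notin labels T -> addr b T = None.
Proof.
elim/tree_ind': T => [|i cs IH] //.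
rewrite addr_node /= in_cons negb_or => /andP[nib].
rewrite eq_sym (negbTE nib).
elim: cs IH 0 => //= c cs IHcs IH k.
rewrite mem_cat negb_or => /andP[nc ncs].
rewrite IH //; last by left.
apply: IHcs => // c' Hc'; apply: IH; by right.
Qed.

Lemma addr_some T b : b \in labels T -> exists p, addr b T = Some p.
Proof.
elim/tree_ind': T => [|i cs IH] //.
rewrite addr_node /= in_cons.
case: eqP => [->|nib] /=; first by rewrite eqxx; eexists.
move=> H. have -> : (i == b) = false by apply/eqP => e; apply: nib.
elim: cs IH 0 H => //= c cs IHcs IH k.
rewrite mem_cat => /orP[Hc|Hcs].
  have [p ->] := IH c (or_introl erefl) Hc. by eexists.
case: (addr b c) => [p|]; first by eexists.
apply: IHcs => // c' Hc'; apply: IH; by right.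
Qed.

Lemma goA_skip b k cs1 cs2 : b \notin flatten (map labels cs1) ->
  goA b k (cs1 ++ cs2) = goA b (k + size cs1) cs2.
Proof.
elim: cs1 k => [|c cs1 IH] k /=; first by rewrite addn0.
rewrite mem_cat negb_or => /andP[nc ncs].
by rewrite addr_none // IH // addSnnS.
Qed.

Lemma goA_in b k cs1 cs2 : b \in flatten (map labels cs1) ->
  exists t p, t < size cs1 /\ goA b k (cs1 ++ cs2) = Some ((k + t) :: p).
Proof.
elim: cs1 k => [|c cs1 IH] k //=.
rewrite mem_cat.
case Hc: (b \in labels c) => /=.
  have [p ->] := addr_some Hc. by exists 0, p; rewrite addn0.
move=> Hcs. rewrite addr_none ?Hc //.
have [t [p [lt ->]]] := IH k.+1 Hcs.
by exists t.+1, p; rewrite addSnnS.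
Qed.

Lemma hlp1 n t : (n.+1 + t == n) = false.
Proof. apply/eqP; lia. Qed.

Lemma left_of_cons c pa pb : left_of (c :: pa) (c :: pb) = left_of pa pb.
Proof. by rewrite /= eqxx. Qed.

Lemma tinv_node s i cs1 d cs2 b x :
  uniq (labels (Node i (cs1 ++ d :: cs2))) -> x \in labels d ->
  tinv s (Node i (cs1 ++ d :: cs2)) b x =
  if b == i then size cs1
  else if b \in flatten (map labels cs1) then s_at s b
  else if b \in labels d then tinv s d b x
  else 0.
Proof.
rewrite [labels (Node _ _)]/= map_cat flatten_cat /=.
rewrite mem_cat mem_cat negb_or negb_or.
rewrite cat_uniq cat_uniq has_cat negb_or.
move=> /andP[/and3P[ni1 nid ni2] /and3P[u1 /andP[d1 d12] /and3P[ud d2 u2]]] xd.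
have xn1 : x \notin flatten (map labels cs1).
  apply/negP => H; move/hasP: d1 => []; exists x => //; by rewrite mem_cat xd.
have xni : (i == x) = false by apply/eqP => e; move: nid; rewrite e xd.
have [px Hpx] := addr_some xd.
have Ax : addr x (Node i (cs1 ++ d :: cs2)) = Some (size cs1 :: px).
  by rewrite addr_node xni goA_skip //= Hpx add0n.
rewrite /tinv Ax.
case: (eqP (y:=i)) => [->|nbi].
  by rewrite addr_node eqxx /=.
have bi : (i == b) = false by apply/eqP => e; apply: nbi.
case H1: (b \in flatten (map labels cs1)).
  have [t [p [lt Hg]]] := goA_in 0 (d :: cs2) H1.
  rewrite addr_node bi Hg add0n /=.
  have -> : (t == size cs1) = false by apply/eqP => e; move: lt; rewrite e ltnn.
  have -> : (size cs1 == t) = false by apply/eqP => e; move: lt; rewrite e ltnn.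
  by rewrite /= ltnNge (ltnW lt).
rewrite addr_node bi goA_skip ?H1 // add0n /=.
case Hd: (b \in labels d).
  have [pb Hpb] := addr_some Hd.
  rewrite Hpb Hpx /= eqxx /=. by [].
rewrite addr_none ?Hd //.
case H2: (b \in flatten (map labels cs2)).
  have [t [p [lt Hg]]] := goA_in (size cs1).+1 [::] (cs1 := cs2) (b := b) H2.
  rewrite cats0 in Hg. rewrite Hg /=.
  rewrite hlp1 eq_sym hlp1.
  by rewrite /= ltn_addr.
have := goA_skip (size cs1).+1 [::] (cs1 := cs2) (b := b).
by rewrite H2 cats0 => ->.
Qed.

Lemma all_consE (T : Type) (p : pred T) x l : all p (x :: l) = p x && all p l.
Proof. by []. Qed.

Lemma local_okE s i cs : local_ok s (Node i cs) =
  [&& size cs == (s_at s i).+1, all (root_label_lt i) cs & all (local_ok s) cs].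
Proof. by []. Qed.

Lemma insl_consE s x j c cs : insl s x j (c :: cs) =
  if j < nlv c then ins s x j c :: cs else c :: insl s x (j - nlv c) cs.
Proof. by []. Qed.

Lemma goA_nseq a k n : goA a k (nseq n Leaf) = None.
Proof. by elim: n k => //= n IH k. Qed.

Lemma sumcat (l1 l2 : seq nat) (F : nat -> nat) :
  \sum_(b <- l1 ++ l2) F b = \sum_(b <- l1) F b + \sum_(b <- l2) F b.
Proof. by rewrite big_cat. Qed.

Section S2.
Variable s : seq nat.

Lemma insl_at x cs1 c cs2 jj : jj < nlv c ->
  insl s x (sumn (map nlv cs1) + jj) (cs1 ++ c :: cs2) = cs1 ++ ins s x jj c :: cs2.
Proof.
move=> H; elim: cs1 => [|c' cs1 IH] /=; first by rewrite add0n H.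
rewrite -addnA ltnNge leq_addr /= addKn. by rewrite IH.
Qed.

Lemma insl_split j cs : j < sumn (map nlv cs) ->
  exists cs1 c cs2 jj, [/\ cs = cs1 ++ c :: cs2, j = sumn (map nlv cs1) + jj & jj < nlv c].
Proof.
elim: cs j => [|c cs IH] j //=.
case: (ltnP j (nlv c)) => H1 H2.
  by exists [::], c, cs, j.
have H3 : j - nlv c < sumn (map nlv cs) by rewrite ltn_subLR.
have [cs1 [c0 [cs2 [jj [E1 E2 E3]]]]] := IH (j - nlv c) H3.
exists (c :: cs1), c0, cs2, jj; split => //=; first by rewrite E1.
by rewrite -addnA -E2 subnKC.
Qed.

Lemma flatten_nseq_leaf n : flatten (map labels (nseq n Leaf)) = [::].
Proof. by elim: n. Qed.

Lemma labels_ins x j T : j < nlv T -> perm_eq (labels (ins s x j T)) (x :: labels T).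
Proof.
elim/tree_ind': T j => [|i cs IH] j.
  by rewrite /= flatten_nseq_leaf.
move=> Hj; have [cs1 [c [cs2 [jj [E1 E2 E3]]]]] := insl_split Hj.
have Hc : List.In c cs by rewrite E1; apply: List.in_elt.
rewrite ins_node E1 E2 insl_at //= !map_cat !flatten_cat /=.
have P1 : perm_eq (labels (ins s x jj c)) (x :: labels c) by apply: IH.
have P2 : perm_eq (i :: flatten (map labels cs1) ++ labels (ins s x jj c) ++ flatten (map labels cs2)) (i :: flatten (map labels cs1) ++ (x :: labels c) ++ flatten (map labels cs2)) by rewrite perm_cons perm_cat2l perm_cat2r.
apply: (perm_trans P2).
apply/permP => p /=; rewrite !count_cat /= !count_cat.
set a1 := count p _; set a2 := count p _; set a3 := count p _.
set b1 := nat_of_bool _; set b2 := nat_of_bool _. lia.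
Qed.

Lemma root_ins i x j c : root_label_lt i c -> x < i -> root_label_lt i (ins s x j c).
Proof. by case: c. Qed.

Lemma local_ok_ins x j T : local_ok s T -> (forall l, l \in labels T -> x < l) ->
  local_ok s (ins s x j T).
Proof.
elim/tree_ind': T j => [|i cs IH] j.
  move=> _ _; rewrite /= size_nseq eqxx /=.
  by elim: (s_at s x).
rewrite local_okE => /and3P[Hsz Hr Hl] Hlab.
have xi : x < i by apply: Hlab; rewrite in_cons eqxx.
rewrite ins_node local_okE.
have : [&& size (insl s x j cs) == size cs, all (root_label_lt i) (insl s x j cs)
          & all (local_ok s) (insl s x j cs)].
  elim: cs j IH Hr Hl Hlab {Hsz} => [|c cs IHcs] j IH //.
  rewrite !all_consE => /andP[rc rcs] /andP[lc lcs] Hlab.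
  rewrite insl_consE.
  case: (j < nlv c); rewrite !all_consE.
    rewrite eqxx rcs lcs root_ins // IH //; first by left.
    by move=> l Hl; apply: Hlab; rewrite in_cons mem_cat Hl orbT.
  rewrite rc lc /=; apply: IHcs => //.
    by move=> c' Hc'; apply: IH; right.
  move=> l; rewrite [labels _]/= in_cons => /orP[/eqP ->//|Hl]; apply: Hlab.
  by rewrite [labels _]/= in_cons mem_cat Hl !orbT.
by move=> /and3P[/eqP -> -> ->]; rewrite Hsz.
Qed.

Lemma addr_ins a x j T : a != x -> addr a (ins s x j T) = addr a T.
Proof.
move=> ax; elim/tree_ind': T j => [|i cs IH] j.
  rewrite [ins _ _ _ _]/= /X addr_node -[x == a]negbK eq_sym ax /=.
  by rewrite goA_nseq.
rewrite ins_node !addr_node; case: (i == a) => //.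
elim: cs 0 j IH => [|c cs IHcs] k j IH //=.
case: (j < nlv c) => /=.
  by rewrite IH //; left.
case: (addr a c) => // ; apply: IHcs => c' Hc'; apply: IH; by right.
Qed.

Lemma nlv_sum T : local_ok s T -> nlv T = (\sum_(b <- labels T) s_at s b).+1.
Proof.
elim/tree_ind': T => [|i cs IH]; first by rewrite /= big_nil.
rewrite local_okE => /and3P[/eqP Hsz _ Hl]. rewrite [labels _]/= big_cons.
suff -> : nlv (Node i cs) = size cs + \sum_(b <- flatten (map labels cs)) s_at s b
  by rewrite Hsz addSn.
rewrite [nlv _]/=.
elim: cs IH Hl {Hsz} => [|c cs IHcs] IH; first by rewrite big_nil.
rewrite all_consE => /andP[lc lcs].
rewrite [map _ _]/= [sumn _]/= [flatten _]/= sumcat IH //; last by left.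
rewrite IHcs //; last by move=> c' Hc'; apply: IH; right.
rewrite -[size (c :: cs)]/(size cs).+1. lia.
Qed.

End S2.

Lemma labels_nodeE i cs : labels (Node i cs) = i :: flatten (map labels cs).
Proof. by []. Qed.

Lemma all_In (A : Type) (p : pred A) cs c : all p cs -> List.In c cs -> p c.
Proof. elim: cs => //= c' cs IH /andP[h1 h2] [<-//|]; exact: IH. Qed.

Lemma tinv_self s T a : tinv s T a a = 0.
Proof. rewrite /tinv; case: (addr a T) => [p|] //. by rewrite prefix_refl nth_default. Qed.

Section S3.
Variable s : seq nat.
Variable x : nat.

Definition okx (T : tree) := [&& local_ok s T, uniq (labels T) & x \notin labels T].

Lemma sumn_nlv cs : all (local_ok s) cs ->
  sumn (map nlv cs) = size cs + \sum_(b <- flatten (map labels cs)) s_at s b.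
Proof.
elim: cs => [|c cs IHcs]; first by rewrite big_nil.
rewrite all_consE => /andP[lc lcs].
rewrite [map _ _]/= [sumn _]/= [flatten _]/= sumcat (nlv_sum lc) IHcs //.
rewrite -[size (c :: cs)]/(size cs).+1. lia.
Qed.

Lemma okx_split i cs1 c cs2 : okx (Node i (cs1 ++ c :: cs2)) ->
  [/\ okx c, all (local_ok s) cs1, size cs1 <= s_at s i,
      [/\ i \notin flatten (map labels cs1), i \notin labels c, i != x & x \notin flatten (map labels cs1)] &
      [/\ uniq (flatten (map labels cs1)), ~~ has (mem (flatten (map labels cs1))) (labels c),
          ~~ has (mem (flatten (map labels cs1))) (flatten (map labels cs2)) &
          ~~ has (mem (labels c)) (flatten (map labels cs2))]].
Proof.
rewrite /okx local_okE !all_cat !all_consE labels_nodeE map_cat flatten_cat.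
rewrite [flatten (map _ (_ :: _))]/= cons_uniq in_cons !mem_cat !negb_or cat_uniq cat_uniq has_cat negb_or.
move=> /and3P[/and3P[/eqP Hsz _ /and3P[l1 lc l2]] /andP[/and3P[ni1 nic ni2] /and3P[u1 /andP[d1 d12] /and3P[uc d2 u2]]] /andP[xi /and3P[x1 xc x2]]].
split => //.
- by rewrite /okx lc uc xc.
- by move: Hsz; rewrite size_cat /= addnS => [[<-]]; rewrite leq_addr.
- by split => //; rewrite eq_sym.
Qed.

Lemma tinv_ins_node i cs1 c cs2 jj b :
  okx (Node i (cs1 ++ c :: cs2)) -> jj < nlv c ->
  tinv s (ins s x (sumn (map nlv cs1) + jj) (Node i (cs1 ++ c :: cs2))) b x =
  if b == i then size cs1
  else if b \in flatten (map labels cs1) then s_at s b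
  else if b \in labels c then tinv s (ins s x jj c) b x else 0.
Proof.
move=> H Hjj.
have Hj : sumn (map nlv cs1) + jj < nlv (Node i (cs1 ++ c :: cs2)).
  by rewrite [nlv _]/= map_cat sumn_cat ltn_add2l /= ltn_addr.
have P := labels_ins s x Hj.
rewrite ins_node insl_at // tinv_node.
- case: (eqVneq b x) => [->|nbx]; last first.
    by rewrite (perm_mem (labels_ins s x Hjj)) in_cons (negbTE nbx).
  have [/and3P[_ _ xc] _ _ [_ _ ix x1] _] := okx_split H.
  rewrite eq_sym (negbTE ix) (negbTE x1) tinv_self (negbTE xc).
  by case: (_ \in _).
- rewrite -(insl_at s x cs1 cs2 Hjj) -ins_node (perm_uniq P).
  by move: H => /and3P[_ u xn]; rewrite cons_uniq xn u.
- by rewrite (perm_mem (labels_ins s x Hjj)) in_cons eqxx.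
Qed.

End S3.

Lemma notin_has (l1 l2 : seq nat) b : ~~ has (mem l1) l2 -> b \in l2 -> b \notin l1.
Proof. move=> H bl2; apply: contraNN H => bl1; apply/hasP; by exists b. Qed.

Lemma flatten_map_cons c cs : flatten (map labels (c :: cs)) = labels c ++ flatten (map labels cs).
Proof. by []. Qed.

Lemma In_mid (A : Type) (c : A) cs1 cs2 : List.In c (cs1 ++ c :: cs2).
Proof. by apply: List.in_elt. Qed.

Section S4.
Variable s : seq nat.
Variable x : nat.

Lemma tinv_bound T j b : okx s x T -> j < nlv T -> b \in labels T ->
  tinv s (ins s x j T) b x <= s_at s b.
Proof.
elim/tree_ind': T j => [|i cs IH] j // H Hj Hb.
have [cs1 [c [cs2 [jj [E1 E2 E3]]]]] := insl_split Hj.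
subst cs j. rewrite tinv_ins_node //.
have [Hc _ Hsz _ _] := okx_split H.
case: ifP => [/eqP->//|_]. case: ifP => // _. case: ifP => // bc.
apply: IH => //; exact: In_mid.
Qed.

Lemma tinv_sum T j : okx s x T -> j < nlv T ->
  \sum_(b <- labels T) tinv s (ins s x j T) b x = j.
Proof.
elim/tree_ind': T j => [|i cs IH] j H Hj.
  by move: Hj; rewrite big_nil /=; case: j.
have [cs1 [c [cs2 [jj [E1 E2 E3]]]]] := insl_split Hj.
subst cs j.
have [Hc l1 Hsz [ni1 nic ix x1] [u1 d1 d12 d2]] := okx_split H.
rewrite labels_nodeE map_cat flatten_cat flatten_map_cons big_cons !sumcat.
rewrite tinv_ins_node // eqxx.
rewrite (eq_big_seq (fun b => s_at s b)); last first.
  move=> b Hb; rewrite tinv_ins_node // Hb.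
  by have -> : (b == i) = false by apply/eqP => e; move: ni1; rewrite -e Hb.
rewrite [\sum_(b <- labels c) _](eq_big_seq (fun b => tinv s (ins s x jj c) b x)); last first.
  move=> b Hb; rewrite tinv_ins_node // Hb (negbTE (notin_has d1 Hb)).
  by have -> : (b == i) = false by apply/eqP => e; move: nic; rewrite -e Hb.
rewrite IH //; last exact: In_mid.
rewrite [\sum_(b <- flatten (map labels cs2)) _]big1_seq; last first.
  move=> b /andP[_ Hb]; rewrite tinv_ins_node // (negbTE (notin_has d12 Hb)) (negbTE (notin_has d2 Hb)).
  have -> : (b == i) = false.
    apply/eqP => e; move: H => /and3P[_ u _]. move: u; rewrite labels_nodeE cons_uniq.
    rewrite map_cat flatten_cat flatten_map_cons !mem_cat -e Hb !orbT. by [].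
  by [].
rewrite (sumn_nlv l1). by rewrite addn0 addnA.
Qed.

Lemma tinv_step T j b : okx s x T -> j.+1 < nlv T -> b \in labels T ->
  tinv s (ins s x j T) b x <= tinv s (ins s x j.+1 T) b x.
Proof.
elim/tree_ind': T j => [|i cs IH] j // H Hj Hb.
have [cs1 [c [cs2 [jj [E1 E2 E3]]]]] := insl_split (ltnW Hj).
subst cs j.
have [Hc l1 Hsz [ni1 nic ix x1] [u1 d1 d12 d2]] := okx_split H.
case: (ltnP jj.+1 (nlv c)) => Hjj.
  rewrite -addnS !tinv_ins_node //.
  case: ifP => // _. case: ifP => // _. case: ifP => // bc.
  apply: IH => //; exact: In_mid.
have Ec : nlv c = jj.+1 by apply/eqP; rewrite eqn_leq Hjj E3.
case: cs2 IH H Hj Hb d12 d2 => [|c2 cs2] IH H Hj Hb d12 d2.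
  move: Hj; rewrite [nlv _]/= map_cat sumn_cat /= Ec => Hj0; clear -Hj0; lia.
rewrite tinv_ins_node //.
have EE : cs1 ++ c :: c2 :: cs2 = (cs1 ++ [:: c]) ++ c2 :: cs2 by rewrite -catA.
have Ej : (sumn (map nlv cs1) + jj).+1 = sumn (map nlv (cs1 ++ [:: c])) + 0.
  by rewrite map_cat sumn_cat /= Ec; clear; lia.
have H' : okx s x (Node i ((cs1 ++ [:: c]) ++ c2 :: cs2)) by rewrite -EE.
have [/and3P[lc2 _ _] _ _ _ _] := okx_split H'.
rewrite Ej EE tinv_ins_node //; last by rewrite (nlv_sum lc2).
rewrite size_cat map_cat flatten_cat [flatten [seq labels _ | _ <- [:: c]]]/= cats0 mem_cat.
case: ifP => [_|_]; first by rewrite leq_addr.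
case: ifP => // _. case: ifP => bc; first by apply: tinv_bound.
by [].
Qed.

End S4.

Lemma map_consE (A B : Type) (f : A -> B) c cs : map f (c :: cs) = f c :: map f cs.
Proof. by []. Qed.

Lemma remE x i cs : rem x (Node i cs) = if i == x then Leaf else Node i (map (rem x) cs).
Proof. by []. Qed.

Lemma rem_id x T : x \notin labels T -> rem x T = T.
Proof.
elim/tree_ind': T => [|i cs IH] //.
rewrite labels_nodeE in_cons negb_or => /andP[xi xcs].
rewrite remE eq_sym (negbTE xi); congr Node.
elim: cs IH xcs => [|c cs IHcs] IH //.
rewrite flatten_map_cons mem_cat negb_or => /andP[xc xcs].
rewrite [map _ _]/= IH //; last by left.
by rewrite IHcs // => c' Hc'; apply: IH; right.
Qed.

Lemma map_rem_id x cs : x \notin flatten (map labels cs) -> map (rem x) cs = cs.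
Proof.
elim: cs => [|c cs IHcs] //.
rewrite flatten_map_cons mem_cat negb_or => /andP[xc xcs].
by rewrite [map _ _]/= rem_id // IHcs.
Qed.

Lemma split_in b cs : b \in flatten (map labels cs) ->
  exists cs1 c cs2, [/\ cs = cs1 ++ c :: cs2, b \in labels c & b \notin flatten (map labels cs1)].
Proof.
elim: cs => [|c cs IH] //.
rewrite flatten_map_cons mem_cat.
case Hc: (b \in labels c) => /=.
  by move=> _; exists [::], c, cs.
move=> /IH [cs1 [c' [cs2 [E1 E2 E3]]]].
exists (c :: cs1), c', cs2; split => //; first by rewrite E1.
by rewrite flatten_map_cons mem_cat Hc.
Qed.

Section S5.
Variable s : seq nat.

Lemma rem_ins x j T : x \notin labels T -> j < nlv T -> rem x (ins s x j T) = T.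
Proof.
elim/tree_ind': T j => [|i cs IH] j.
  by move=> _ _; rewrite /= eqxx.
move=> Hx Hj.
have [cs1 [c [cs2 [jj [E1 E2 E3]]]]] := insl_split Hj.
subst cs j.
move: Hx; rewrite labels_nodeE in_cons negb_or map_cat flatten_cat flatten_map_cons !mem_cat !negb_or.
move=> /andP[xi /and3P[x1 xc x2]].
rewrite ins_node insl_at // remE eq_sym (negbTE xi) map_cat [map _ (_ :: _)]/=.
rewrite !map_rem_id // IH //; exact: In_mid.
Qed.

Lemma root_rem i x c : root_label_lt i c -> root_label_lt i (rem x c).
Proof. case: c => // j cs; rewrite remE; by case: (j == x). Qed.

Lemma local_ok_rem x T : local_ok s T -> local_ok s (rem x T).
Proof.
elim/tree_ind': T => [|i cs IH] //.
rewrite remE; case: (i == x) => //.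
rewrite !local_okE size_map => /and3P[-> Hr Hl].
elim: cs IH Hr Hl => [|c cs IHcs] IH //.
rewrite map_consE !all_consE => /andP[rc rcs] /andP[lc lcs].
rewrite root_rem // IH //; last by left.
by apply: IHcs => // c' Hc'; apply: IH; right.
Qed.

Lemma leaves_nseq x cs : all (root_label_lt x) cs ->
  (forall l, l \in flatten (map labels cs) -> x <= l) -> cs = nseq (size cs) Leaf.
Proof.
elim: cs => [|c cs IH] //.
rewrite all_consE => /andP[rc rcs] H.
case: c rc H => [|j cs'] rc H.
  rewrite /= -IH // => l Hl; apply: H; by rewrite flatten_map_cons mem_cat Hl orbT.
have := H j; rewrite flatten_map_cons mem_cat labels_nodeE in_cons eqxx => /(_ erefl).
have rc' : j < x := rc. by rewrite leqNgt rc'.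
Qed.

Lemma ins_rem x T : local_ok s T -> uniq (labels T) -> x \in labels T ->
  (forall l, l \in labels T -> x <= l) ->
  exists2 j, j < nlv (rem x T) & ins s x j (rem x T) = T.
Proof.
elim/tree_ind': T => [|i cs IH] //.
rewrite local_okE => /and3P[/eqP Hsz Hr Hl] Hu Hx Hle.
rewrite remE; case: eqP => [E|ne].
  subst i; exists 0 => //=. rewrite /X -Hsz -(leaves_nseq Hr) //.
  move=> l Hl'; apply: Hle; by rewrite labels_nodeE in_cons Hl' orbT.
move: Hx; rewrite labels_nodeE in_cons.
have -> : (x == i) = false by apply/eqP => e; apply: ne.
move=> /= /split_in [cs1 [c [cs2 [E1 xc x1]]]].
subst cs.
move: Hu; rewrite labels_nodeE cons_uniq map_cat flatten_cat flatten_map_cons cat_uniq cat_uniq.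
move=> /andP[_ /and3P[u1 _ /and3P[uc d2 u2]]].
have x2 : x \notin flatten (map labels cs2).
  by apply: contraNN d2 => x2; apply/hasP; exists x.
move: Hl; rewrite all_cat all_consE => /and3P[l1 lc l2].
have Hle' : forall l, l \in labels c -> x <= l.
  by move=> l Hl; apply: Hle; rewrite labels_nodeE in_cons map_cat flatten_cat flatten_map_cons !mem_cat Hl !orbT.
have [jj Hjj Ejj] := IH c (In_mid _ _ _) lc uc xc Hle'.
rewrite map_cat [map _ (_ :: _)]/= !map_rem_id //.
have E : ins s x (sumn (map nlv cs1) + jj) (Node i (cs1 ++ rem x c :: cs2)) = Node i (cs1 ++ c :: cs2).
  by rewrite ins_node insl_at // Ejj.
have L : sumn (map nlv cs1) + jj < nlv (Node i (cs1 ++ rem x c :: cs2)).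
  by rewrite [nlv _]/= map_cat sumn_cat ltn_add2l /= ltn_addr.
exists (sumn (map nlv cs1) + jj); [exact: L | exact: E].
Qed.

End S5.

Lemma iotaS k m : k < m -> iota k.+1 (m - k) = k.+1 :: iota k.+2 (m - k.+1).
Proof. by move=> H; rewrite -(subnSK H). Qed.

Lemma sum_le_eq (r : seq nat) (F G : nat -> nat) :
  (forall b, b \in r -> F b <= G b) -> \sum_(b <- r) F b = \sum_(b <- r) G b ->
  forall b, b \in r -> F b = G b.
Proof.
elim: r => [|c r IH] // H; rewrite !big_cons => E b.
have h1 : F c <= G c by apply: H; rewrite in_cons eqxx.
have h2 : \sum_(b <- r) F b <= \sum_(b <- r) G b.
  rewrite big_seq_cond [X in _ <= X]big_seq_cond; apply: leq_sum => i /andP[Hi _].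
  by apply: H; rewrite in_cons Hi orbT.
have e1 : F c = G c by apply/eqP; rewrite eqn_leq h1 /=; move: E h2; clear; lia.
rewrite in_cons => /orP[/eqP -> //|Hb].
apply: IH => //; first by move=> i Hi; apply: H; rewrite in_cons Hi orbT.
move: E; rewrite e1; lia.
Qed.

Section G.
Variable s : seq nat.

Definition good k T := perm_eq (labels T) (iota k.+1 ((size s) - k)) && local_ok s T.

Lemma good_uniq k T : good k T -> uniq (labels T).
Proof. by move=> /andP[P _]; rewrite (perm_uniq P) iota_uniq. Qed.

Lemma good_mem k T l : k <= (size s) -> good k T -> (l \in labels T) = (k < l <= (size s)).
Proof. by move=> km /andP[P _]; rewrite (perm_mem P) mem_iota addSn subnKC // ltnS. Qed.

Lemma good_Leaf T : good (size s) T -> T = Leaf.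
Proof.
move=> /andP[P _]; move: P; rewrite subnn /= => /perm_nilP.
by case: T.
Qed.

Lemma good_m_Leaf : good (size s) Leaf.
Proof. by rewrite /good subnn. Qed.

Lemma good_okx k T : k < (size s) -> good k.+1 T -> okx s k.+1 T.
Proof.
move=> km H; rewrite /okx (good_uniq H) (good_mem _ km H) ltnn /=.
by case/andP: H => _ ->.
Qed.

Lemma good_ins k T j : k < (size s) -> good k.+1 T -> j < nlv T -> good k (ins s k.+1 j T).
Proof.
move=> km H Hj; move: (H) => /andP[P lT].
apply/andP; split.
  apply: perm_trans (labels_ins s k.+1 Hj) _. by rewrite iotaS // perm_cons.
apply: local_ok_ins => // l Hl. by move: Hl; rewrite (good_mem _ km H) => /andP[].
Qed.

Lemma good_rem k T : k < (size s) -> good k T ->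
  good k.+1 (rem k.+1 T) /\ exists2 j, j < nlv (rem k.+1 T) & ins s k.+1 j (rem k.+1 T) = T.
Proof.
move=> km H; move: (H) => /andP[P lT].
have [j Hj E] : exists2 j, j < nlv (rem k.+1 T) & ins s k.+1 j (rem k.+1 T) = T.
  apply: ins_rem => //; first exact: good_uniq H.
    by rewrite (good_mem _ (ltnW km) H) ltnSn.
  by move=> l; rewrite (good_mem _ (ltnW km) H) => /andP[].
split; last by exists j.
rewrite /good local_ok_rem // andbT.
have P2 := labels_ins s k.+1 Hj. rewrite E in P2.
rewrite -(perm_cons k.+1) -iotaS //.
rewrite perm_sym in P2; exact: perm_trans P2 P.
Qed.

Definition le k T U := forall a b, k < a -> a < b -> b <= (size s) -> tinv s T b a <= tinv s U b a.
Definition Phi k T := \sum_(k.+1 <= a < (size s).+1) \sum_(a.+1 <= b < (size s).+1) tinv s T b a.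

Lemma Phi_split k T : k < (size s) ->
  Phi k T = \sum_(k.+2 <= b < (size s).+1) tinv s T b k.+1 + Phi k.+1 T.
Proof. by move=> km; rewrite /Phi big_ltn. Qed.

Lemma col_sum k T F : k < (size s) -> good k.+1 T ->
  \sum_(k.+2 <= b < (size s).+1) F b = \sum_(b <- labels T) F b.
Proof.
move=> km /andP[P _]; apply: perm_big.
by rewrite /index_iota subSS perm_sym.
Qed.

Lemma tinv_ins_other x j T a b : a != x -> b != x -> tinv s (ins s x j T) b a = tinv s T b a.
Proof. by move=> ax bx; rewrite /tinv !addr_ins. Qed.

Lemma Phi_ins k T j : k < (size s) -> good k.+1 T -> j < nlv T ->
  Phi k (ins s k.+1 j T) = \sum_(b <- labels T) tinv s (ins s k.+1 j T) b k.+1 + Phi k.+1 T.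
Proof.
move=> km H Hj; rewrite Phi_split // (col_sum _ km H); congr (_ + _).
apply: eq_big_nat => a /andP[Ha _]; apply: eq_big_nat => b /andP[Hb _].
rewrite tinv_ins_other //.
- by rewrite neq_ltn Ha orbT.
- by rewrite neq_ltn (leq_trans Ha (ltnW Hb)) orbT.
Qed.

End G.

Section H.
Variable s : seq nat.

Lemma nlv_pos T : local_ok s T -> 0 < nlv T.
Proof. by move/(nlv_sum (s:=s)) ->. Qed.

Lemma col0 x T b : okx s x T -> b \in labels T -> tinv s (ins s x 0 T) b x = 0.
Proof.
move=> H Hb; have [lT _ _] := and3P H.
have := tinv_sum H (nlv_pos lT) => /eqP.
rewrite sum_nat_seq_eq0 => /allP /(_ b Hb) /=. by move/eqP.
Qed.

Lemma colmax x T b : okx s x T -> b \in labels T ->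
  tinv s (ins s x (nlv T).-1 T) b x = s_at s b.
Proof.
move=> H Hb; have [lT _ _] := and3P H.
have Hj : (nlv T).-1 < nlv T by rewrite prednK // nlv_pos.
apply: (sum_le_eq (r := labels T) (F := fun b => tinv s (ins s x (nlv T).-1 T) b x) (G := s_at s)) => //.
  move=> b' Hb' /=; exact: tinv_bound H Hj Hb'.
by rewrite tinv_sum // (nlv_sum lT).
Qed.

Definition step k T U := [/\ good s k T, good s k U, le s k T U & Phi s k U = (Phi s k T).+1].

Lemma step_within k T j : k < size s -> good s k.+1 T -> j.+1 < nlv T ->
  step k (ins s k.+1 j T) (ins s k.+1 j.+1 T).
Proof.
move=> km H Hj.
have Hx := good_okx km H.
split.
- by apply: good_ins => //; apply: ltnW.
- by apply: good_ins.
- move=> a b Ha Hab Hb.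
  case: (eqVneq a k.+1) => [ea|na].
    subst a; apply: tinv_step => //. by rewrite (good_mem _ km H) Hab Hb.
  have Ha' : k.+1 < a by rewrite ltn_neqAle eq_sym na Ha.
  have nb : b != k.+1 by rewrite neq_ltn (leq_trans Ha' (ltnW Hab)) orbT.
  by rewrite !tinv_ins_other.
- rewrite !Phi_ins //; last exact: ltnW.
  by rewrite !tinv_sum //; apply: ltnW.
Qed.

Lemma step_between k A B jA jB : k < size s -> step k.+1 A B -> jA < nlv A -> jB < nlv B ->
  (forall b, b \in labels A -> tinv s (ins s k.+1 jA A) b k.+1 = tinv s (ins s k.+1 jB B) b k.+1) ->
  step k (ins s k.+1 jA A) (ins s k.+1 jB B).
Proof.
move=> km [gA gB le1 Ph] HA HB Hcol.
have PAB : perm_eq (labels A) (labels B).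
  move: gA gB => /andP[PA _] /andP[PB _]. rewrite perm_sym in PB. exact: perm_trans PA PB.
split.
- exact: good_ins.
- exact: good_ins.
- move=> a b Ha Hab Hb.
  case: (eqVneq a k.+1) => [ea|na].
    subst a. rewrite Hcol //. by rewrite (good_mem _ km gA) Hab Hb.
  have Ha' : k.+1 < a by rewrite ltn_neqAle eq_sym na Ha.
  have nb : b != k.+1 by rewrite neq_ltn (leq_trans Ha' (ltnW Hab)) orbT.
  rewrite !tinv_ins_other //. by apply: le1.
- rewrite !Phi_ins // Ph -(perm_big _ PAB) addnS.
  congr (_ + _).+1. apply: eq_big_seq => b Hb. by rewrite Hcol.
Qed.

Lemma Phi_mono k T U : le s k T U -> Phi s k T <= Phi s k U.
Proof.
move=> H; rewrite /Phi big_seq_cond [X in _ <= X]big_seq_cond.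
apply: leq_sum => a /andP[Ha _]; rewrite mem_index_iota in Ha.
rewrite big_seq_cond [X in _ <= X]big_seq_cond.
apply: leq_sum => b /andP[Hb _]; rewrite mem_index_iota in Hb.
case/andP: Ha => Ha1 Ha2; case/andP: Hb => Hb1 Hb2.
by apply: H.
Qed.

Lemma Phi_eq k T U : le s k T U -> Phi s k T = Phi s k U ->
  forall a b, k < a -> a < b -> b <= size s -> tinv s T b a = tinv s U b a.
Proof.
move=> H E a b Ha Hab Hb.
have inner : forall a', a' \in index_iota k.+1 (size s).+1 ->
  \sum_(a'.+1 <= b' < (size s).+1) tinv s T b' a' <= \sum_(a'.+1 <= b' < (size s).+1) tinv s U b' a'.
  move=> a' Ha'; rewrite mem_index_iota in Ha'; case/andP: Ha' => Ha1 Ha2.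
  rewrite big_seq_cond [X in _ <= X]big_seq_cond.
  apply: leq_sum => b' /andP[Hb' _]; rewrite mem_index_iota in Hb'.
  case/andP: Hb' => Hb1 Hb2; by apply: H.
have Ea : a \in index_iota k.+1 (size s).+1 by rewrite mem_index_iota Ha ltnS (leq_trans (ltnW Hab) Hb).
have E2 := sum_le_eq inner E Ea.
have Eb : b \in index_iota a.+1 (size s).+1 by rewrite mem_index_iota Hab ltnS Hb.
apply: (sum_le_eq _ E2 Eb) => b' Hb'.
rewrite mem_index_iota in Hb'; case/andP: Hb' => Hb1 Hb2; apply: H => //.
Qed.

Lemma inj_good n : forall k T U, size s - k = n -> k <= size s -> good s k T -> good s k U ->
  (forall a b, k < a -> a < b -> b <= size s -> tinv s T b a = tinv s U b a) -> T = U.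
Proof.
elim: n => [|n IH] k T U Hn Hk gT gU Ht.
  have E : k = size s by apply/eqP; rewrite eqn_leq Hk /= -subn_eq0 Hn.
  subst k. by rewrite (good_Leaf gT) (good_Leaf gU).
have km : k < size s by rewrite -subn_gt0 Hn.
have [gT' [j Hj ET]] := good_rem km gT.
have [gU' [j' Hj' EU]] := good_rem km gU.
move: (rem k.+1 T) gT' Hj ET => T' gT' Hj ET.
move: (rem k.+1 U) gU' Hj' EU => U' gU' Hj' EU.
have E' : T' = U'.
  apply: (IH k.+1) => //.
  - by rewrite subnS Hn.
  - move=> a b Ha Hab Hb.
    have na : a != k.+1 by rewrite neq_ltn Ha orbT.
    have nb : b != k.+1 by rewrite neq_ltn (leq_trans Ha (ltnW Hab)) orbT.
    rewrite -(tinv_ins_other s j T' na nb) -(tinv_ins_other s j' U' na nb) ET EU.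
    apply: Ht => //; exact: ltnW.
have Ej : j = j'.
  rewrite -(tinv_sum (good_okx km gT') Hj) -(tinv_sum (good_okx km gU') Hj') ET EU -E'.
  apply: eq_big_seq => b Hb. apply: Ht => //.
  by move: Hb; rewrite (good_mem _ km gT') => /andP[].
  by move: Hb; rewrite (good_mem _ km gT') => /andP[].
by rewrite -ET -EU E' Ej.
Qed.

Lemma cover_of_step T U : step 0 T U -> s_cover s T U.
Proof.
move=> [gT gU le1 Ph].
have dec : forall V, good s 0 V <-> s_decreasing s V.
  move=> V; rewrite /good /s_decreasing subn0; split; first by case/andP.
  by case=> -> ->.
split.
- by apply/dec.
- by apply/dec.
- exact: le1.
- by move=> E; move: Ph; rewrite E; lia.
move=> V /dec gV l1 l2.
have p1 := Phi_mono l1; have p2 := Phi_mono l2.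
case: (eqVneq (Phi s 0 V) (Phi s 0 T)) => [e|ne].
  left; symmetry; apply: (inj_good (n := size s - 0)) gT gV _ => //.
  by apply: Phi_eq => //; rewrite e.
right; apply: (inj_good (n := size s - 0)) gV gU _ => //.
apply: Phi_eq => //; apply/eqP; rewrite eqn_leq p2 Ph ltn_neqAle eq_sym ne p1.
by [].
Qed.

End H.

Fixpoint chain (R : tree -> tree -> Prop) (l : seq tree) : Prop :=
  match l with
  | a :: l' => match l' with b :: _ => R a b /\ chain R l' | [::] => True end
  | [::] => True
  end.

Lemma chain_cat R a A b B : chain R (a :: A) -> chain R (b :: B) -> R (last a A) b ->
  chain R (a :: A ++ b :: B).
Proof.
elim: A a => [|a' A IH] a /=; first by move=> _ H1 H2; split.
by move=> [h1 h2] H1 H2; split => //; apply: IH.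
Qed.

Lemma chain_map_iota R (f : nat -> tree) n i :
  (forall j, i <= j -> j.+1 < i + n -> R (f j) (f j.+1)) -> chain R (map f (iota i n)).
Proof.
elim: n i => [|n IH] i H //=.
case: n IH H => [|n] IH H //=.
split; first by apply: H => //; rewrite !addnS !ltnS leq_addr.
have := IH i.+1; rewrite /=; apply => j Hj Hj2; apply: H.
  exact: ltnW.
by rewrite addSn -addnS in Hj2.
Qed.

Lemma chain_nth R l d : chain R l -> forall i, i.+1 < size l -> R (nth d l i) (nth d l i.+1).
Proof.
elim: l => [|a l IH] //=.
case: l IH => [|b l] IH //= [h1 h2] [|i] Hi //=.
exact: (IH h2 i Hi).
Qed.

Lemma In_mem (T : eqType) (x : T) l : List.In x l <-> x \in l.
Proof.
elim: l => [|a l IH] //=; rewrite in_cons; split.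
- by move=> [->|/IH ->]; rewrite ?eqxx ?orbT.
- by move=> /orP[/eqP ->|/IH]; [left|right].
Qed.

Lemma In_map (A B : Type) (f : A -> B) l y : List.In y (map f l) <-> exists2 x, List.In x l & y = f x.
Proof.
elim: l => [|a l IH]; first by split => // [[]].
rewrite map_consE /=; split.
- move=> [<-|/IH [x Hx ->]]; first by exists a; [left|].
  by exists x; [right|].
- move=> [x [<-|Hx] E]; first by left; rewrite E.
  by right; apply/IH; exists x.
Qed.

Lemma In_cat (A : Type) (l1 l2 : seq A) y : List.In y (l1 ++ l2) <-> List.In y l1 \/ List.In y l2.
Proof.
elim: l1 => [|a l IH] /=; first tauto.
rewrite IH; tauto.
Qed.

Lemma NoDup_cat (A : Type) (l1 l2 : seq A) : List.NoDup l1 -> List.NoDup l2 ->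
  (forall a, List.In a l1 -> ~ List.In a l2) -> List.NoDup (l1 ++ l2).
Proof.
elim: l1 => [|a l IH] //= N1 N2 D.
inversion N1; subst.
constructor.
  rewrite In_cat => [[H|H]] //. by apply: (D a) => //; left.
apply: IH => // b Hb; apply: D; by right.
Qed.

Lemma NoDup_map_inj (A B : Type) (f : A -> B) l : List.NoDup l ->
  (forall x y, List.In x l -> List.In y l -> f x = f y -> x = y) -> List.NoDup (map f l).
Proof.
elim: l => [|a l IH] N H; first by constructor.
rewrite map_consE; inversion N; subst. constructor.
  move/In_map => [x Hx E]. have E' := H _ _ (or_intror Hx) (or_introl erefl) (esym E).
  by subst.
apply: IH => // x y Hx Hy; apply: H; by right.
Qed.

Lemma uniq_NoDup (T : eqType) (l : seq T) : uniq l -> List.NoDup l.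
Proof.
elim: l => [|a l IH] /=; first by constructor.
move=> /andP[Ha Hl]; constructor; last exact: IH.
by move/In_mem; apply/negP.
Qed.

Lemma last_iota i n : last i (iota i.+1 n) = i + n.
Proof. elim: n i => [|n IH] i /=; first by rewrite addn0. by rewrite IH addnS. Qed.

Lemma pred_lt n j : j < n -> n.-1 < n.
Proof. by case: n. Qed.

Lemma hlp4 n j : j.+1 < n -> (n.-1 - j.+1).+1 < n.
Proof. case: n => //= n; lia. Qed.

Lemma hlp5 n j : j.+1 < n -> n.-1 - j = (n.-1 - j.+1).+1.
Proof. case: n => //= n; lia. Qed.

Lemma hlp6 n j1 j2 : j1 < n -> j2 < n -> n.-1 - j1 = n.-1 - j2 -> j1 = j2.
Proof. case: n => //= n; lia. Qed.

Section L.
Variable s : seq nat.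

Definition g x (b : bool) T j := ins s x (if b then j else (nlv T).-1 - j) T.
Definition blk x b T := map (g x b T) (iota 0 (nlv T)).

Fixpoint zig x (b : bool) (Ls : seq tree) : seq tree :=
  if Ls is T :: Ls' then blk x b T ++ zig x (~~ b) Ls' else [::].

Fixpoint Lst n : seq tree :=
  if n is n'.+1 then zig (size s - n') true (Lst n') else [:: Leaf].

Definition R k T U := step s k T U \/ step s k U T.

Lemma blk_cons x b T : 0 < nlv T ->
  blk x b T = g x b T 0 :: map (g x b T) (iota 1 (nlv T).-1).
Proof. by rewrite /blk; case: (nlv T). Qed.

Lemma blk_last x b T : 0 < nlv T ->
  last (g x b T 0) (map (g x b T) (iota 1 (nlv T).-1)) = g x b T (nlv T).-1.
Proof. by move=> H; rewrite last_map last_iota. Qed.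

Lemma blk_In x b T U : List.In U (blk x b T) <-> exists2 j, j < nlv T & U = ins s x j T.
Proof.
rewrite /blk In_map; split.
- move=> [j /In_mem Hj ->]; rewrite mem_iota add0n /= in Hj.
  exists (if b then j else (nlv T).-1 - j) => //.
  case: b => //. apply: leq_ltn_trans (leq_subr _ _) _.
  exact: pred_lt Hj.
- move=> [j Hj ->].
  exists (if b then j else (nlv T).-1 - j).
    apply/In_mem; rewrite mem_iota add0n; case: b => //.
    by case: (nlv T) Hj => // n _; rewrite /= ltnS leq_subr.
  rewrite /g; case: b => //. rewrite subKn //. by case: (nlv T) Hj.
Qed.

Lemma blk_chain k b T : k < size s -> good s k.+1 T -> chain (R k) (blk k.+1 b T).
Proof.
move=> km H; apply: chain_map_iota => j _ Hj; rewrite add0n in Hj.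
rewrite /g; case: b.
  by left; apply: step_within.
right.
have -> : (nlv T).-1 - j = ((nlv T).-1 - j.+1).+1.
  exact: hlp5.
apply: step_within => //.
exact: hlp4.
Qed.

Lemma zig_In x b Ls U : List.In U (zig x b Ls) <->
  exists2 T, List.In T Ls & exists2 j, j < nlv T & U = ins s x j T.
Proof.
elim: Ls b => [|T Ls IH] b /=; first by split => // [[]].
rewrite In_cat blk_In IH; split.
- move=> [[j Hj ->]|[T' HT' HH]]; first by exists T; [left|exists j].
  by exists T'; [right|].
- move=> [T' [<-|HT'] HH]; first by left.
  by right; exists T'.
Qed.

Lemma zig_NoDup k b Ls : k < size s -> (forall T, List.In T Ls -> good s k.+1 T) ->
  List.NoDup Ls -> List.NoDup (zig k.+1 b Ls).
Proof.
move=> km; elim: Ls b => [|T Ls IH] b Hg N /=; first by constructor.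
inversion N as [|T0 Ls0 NT NLs]; subst.
have gT : good s k.+1 T by apply: Hg; left.
have Hx := good_okx km gT.
apply: NoDup_cat.
- apply: NoDup_map_inj; first by apply: uniq_NoDup; apply: iota_uniq.
  move=> j1 j2 /In_mem I1 /In_mem I2; rewrite !mem_iota !add0n /= in I1 I2.
  have Hh : forall j, j < nlv T -> (if b then j else (nlv T).-1 - j) < nlv T.
    move=> j Hj; case: b => //; apply: leq_ltn_trans (leq_subr _ _) _.
    exact: pred_lt Hj.
  rewrite /g => E.
  have E2 : (if b then j1 else (nlv T).-1 - j1) = (if b then j2 else (nlv T).-1 - j2).
    by rewrite -(tinv_sum Hx (Hh _ I1)) -(tinv_sum Hx (Hh _ I2)) E.
  case: b E2 {Hh E} => // E2. exact: hlp6 I1 I2 E2.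
- apply: IH => //; move=> T' HT'; apply: Hg; by right.
- move=> U /blk_In [j Hj ->] /zig_In [T' HT' [j' Hj' E]].
  have [_ _ xT] := and3P Hx.
  have gT' : good s k.+1 T' by apply: Hg; right.
  have [_ _ xT'] := and3P (good_okx km gT').
  have := rem_ins s xT Hj; rewrite E rem_ins // => E'.
  by subst.
Qed.

Lemma zig_chain k b Ls : k < size s -> (forall T, List.In T Ls -> good s k.+1 T) ->
  chain (R k.+1) Ls -> chain (R k) (zig k.+1 b Ls).
Proof.
move=> km; elim: Ls b => [|T Ls IH] b Hg Hc //=.
have gT : good s k.+1 T by apply: Hg; left.
have [lT _ _] := and3P (good_okx km gT).
have pT := nlv_pos lT.
case: Ls IH Hg Hc => [|T2 Ls] IH Hg Hc.
  by rewrite cats0; apply: blk_chain.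
case: Hc => HR Hc.
have gT2 : good s k.+1 T2 by apply: Hg; right; left.
have [lT2 _ _] := and3P (good_okx km gT2).
have pT2 := nlv_pos lT2.
have IH2 := IH (~~ b) (fun T' H => Hg T' (or_intror H)) Hc.
move: IH2; rewrite [zig _ _ (_ :: _)]/= (blk_cons _ _ pT2) cat_cons => IH2.
rewrite (blk_cons _ _ pT) cat_cons.
apply: chain_cat => //.
- by rewrite -blk_cons //; apply: blk_chain.
- rewrite blk_last // /g.
  have Hx := good_okx km gT; have Hx2 := good_okx km gT2.
  have gen : forall A B jA jB, step s k.+1 A B -> good s k.+1 A -> good s k.+1 B ->
     jA < nlv A -> jB < nlv B ->
     (forall b0, b0 \in labels A -> tinv s (ins s k.+1 jA A) b0 k.+1 = tinv s (ins s k.+1 jB B) b0 k.+1) ->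
     step s k (ins s k.+1 jA A) (ins s k.+1 jB B).
    by move=> A B jA jB St _ _ HA HB Hcol; apply: step_between.
  have HA1 : (nlv T).-1 < nlv T by rewrite prednK.
  have HB1 : (nlv T2).-1 < nlv T2 by rewrite prednK.
  have memAB : forall b0, (b0 \in labels T) = (b0 \in labels T2).
    by move=> b0; rewrite (good_mem _ km gT) (good_mem _ km gT2).
  clear IH IH2; case: b; rewrite /= ?subn0 ?subnn.
  + case: HR => St; [left|right]; apply: gen => // b0 Hb0;
      rewrite !colmax //; by rewrite -?memAB // memAB.
  + case: HR => St; [left|right]; apply: gen => // b0 Hb0;
      rewrite !col0 //; by rewrite -?memAB // memAB.
Qed.

End L.

Lemma good0_dec s V : good s 0 V <-> s_decreasing s V.
Proof.
rewrite /good /s_decreasing subn0; split; first by case/andP.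
by case=> -> ->.
Qed.

Lemma hlp7 m n : n.+1 <= m -> m - n.+1 < m.
Proof. lia. Qed.

Lemma Lst_props s n : n <= size s ->
  [/\ forall U, List.In U (Lst s n) <-> good s (size s - n) U,
      List.NoDup (Lst s n) & chain (R s (size s - n)) (Lst s n)].
Proof.
elim: n => [|n IH] hn.
  rewrite subn0; split => //=.
  - move=> U; split; first by case=> // <-; apply: good_m_Leaf.
    by move/good_Leaf ->; left.
  - constructor => //; constructor.
have [Mem ND Ch] := IH (ltnW hn).
have Ek : size s - n = (size s - n.+1).+1 by rewrite subnSK.
have km := hlp7 hn.
move: (size s - n.+1) Ek km => k Ek km.
rewrite Ek in Mem Ch.
rewrite [Lst s n.+1]/= Ek.
have Hg : forall T, List.In T (Lst s n) -> good s k.+1 T by move=> T /Mem.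
split.
- move=> U; rewrite zig_In; split.
    move=> [T /Hg gT [j Hj ->]]; exact: good_ins.
  move=> gU; have [gU' [j Hj E]] := good_rem km gU.
  exists (rem k.+1 U); first by apply/Mem.
  by exists j.
- exact: zig_NoDup.
- exact: zig_chain.
Qed.

Unset Implicit Arguments.

Theorem theorem1 (s : seq nat) (hs : all (fun x => 0 < x) s) :
  exists L : seq tree,
    List.NoDup L /\
    (forall T, List.In T L <-> s_decreasing s T) /\
    (forall i, i.+1 < size L ->
       s_cover s (nth Leaf L i) (nth Leaf L i.+1) \/
       s_cover s (nth Leaf L i.+1) (nth Leaf L i)).
Proof.
have [Mem ND Ch] := Lst_props (leqnn (size s)).
rewrite subnn in Mem Ch.
exists (Lst s (size s)); split => //; split.
  by move=> T; rewrite Mem good0_dec.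
move=> i Hi; case: (chain_nth Leaf Ch Hi) => H; [left|right]; exact: cover_of_step.
Qed.
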